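(* Let $H(x|t)$ and $E(x|t)$ be the row-to-row transfer matrices defined in the context. Then for independent spectral parameters $x,x'$: $$H(x)H(x')=H(x')H(x),\qquad E(x)E(x')=E(x')E(x),\qquad H(x)E(x')=E(x')H(x).$$ In particular, the operators $Z_n(x_1,\dots,x_n|t)=H(x_n|t)\cdots H(x_1|t)$ and $Z'_k(x_1,\dots,x_k|t)=E(x_k|t)\cdots E(x_1|t)$ are symmetric in the $x$-variables.
   Context: $\beta$ indeterminate, $x\oplus y=x+y+\beta xy$, $x\ominus y=(x-y)/(1+\beta y)$. $V=\mathbb{Z}v_0\oplus\mathbb{Z}v_1$ with $\sigma^-v_1=v_0,\sigma^-v_0=0,\sigma^+v_0=v_1,\sigma^+v_1=0$. The quantum space is $\mathcal{V}=V^{\otimes N}$ (scalars extended to rational functions in $\beta,t_1,\dots,t_N$, spectral parameters, and formal power series in $q$). For an auxiliary copy $V(x)$ and the $j$-th tensor factor of $\mathcal{V}$ define $L_j(x)=\sum_{a,b}e_{ab}\otimes L_{ab}$ with $L_{00}=\sigma^+\sigma^-+(x\ominus t_j)\sigma^-\sigma^+$, $L_{01}=(1+\beta\,x\ominus t_j)\sigma^+$, $L_{10}=\sigma^-$, $L_{11}=\sigma^-\sigma^+$ (the $\sigma$'s acting on the $j$-th factor, $e_{ab}v_b=v_a$ the matrix units on $V(x)$), and $L'_j(x)$ with $L'_{00}=\sigma^-\sigma^++(x\oplus t_j)\sigma^+\sigma^-$, $L'_{01}=\sigma^+$, $L'_{10}=(1+\beta\,x\oplus t_j)\sigma^-$,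 $L'_{11}=\sigma^+\sigma^-$. The monodromy matrix is $M(x|t)=L_N(x)\cdots L_2(x)L_1(x)=\sum_{a,b}e_{ab}\otimes M_{ab}$ and $A=M_{00},B=M_{01},C=M_{10},D=M_{11}\in\mathrm{End}\,\mathcal{V}$; $A',B',C',D'$ are defined likewise from $L'$. The transfer matrices are $H(x|t)=A(x|t)+qD(x|t)$ and $E(x|t)=A'(x|t)+qD'(x|t)$. *)

(* Defs.v *)
From mathcomp Require Import all_boot all_order all_algebra all_fingroup.
Set Implicit Arguments. Unset Strict Implicit. Unset Printing Implicit Defensive.
Import GRing.Theory.
Local Open Scope ring_scope.

Section Transfer.
Variable F : fieldType.
Variable N : nat.

(* Basis states of V^{(x)N}: s j = 0 means v_0 at factor j, 1 means v_1. *)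
Definition state := {ffun 'I_N -> 'I_2}.
Definition dimV := #|{: state}|.
Definition op := 'M[F]_dimV.

(* the 2x2 matrix m acting on the j-th tensor factor (identity elsewhere);
   matrix entries indexed by (enum_val) basis states *)
Definition st (i : 'I_dimV) : state := enum_val (A := {: state}) i.

Definition loc (j : 'I_N) (m : 'M[F]_2) : op :=
  \matrix_(i, i') (m (st i j) (st i' j) *
     ([forall k : 'I_N, (k != j) ==> (st i k == st i' k)])%:R).

(* sigma^- v_1 = v_0, sigma^+ v_0 = v_1 *)
Definition sigm : 'M[F]_2 := \matrix_(a, b) ((a == 0) && (b == 1))%:R.
Definition sigp : 'M[F]_2 := \matrix_(a, b) ((a == 1) && (b == 0))%:R.

Definition oplus (beta x y : F) := x + y + beta * x * y.
Definition ominus (beta x y : F) := (x - y) / (1 + beta * y).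

(* 2x2 matrices (auxiliary space) with operator entries *)
Definition mono := 'I_2 -> 'I_2 -> op.
Definition mono_mul (P Q : mono) : mono := fun a b => \sum_(c < 2) P a c *m Q c b.
Definition mono_id : mono := fun a b => ((a == b)%:R)%:M.

Definition Lop (beta : F) (t : 'I_N -> F) (x : F) (j : 'I_N) : mono :=
  fun a b =>
  let y := ominus beta x (t j) in
  if (a == 0) && (b == 0) then loc j (sigp *m sigm + y *: (sigm *m sigp))
  else if (a == 0) && (b == 1) then loc j ((1 + beta * y) *: sigp)
  else if (a == 1) && (b == 0) then loc j sigm
  else loc j (sigm *m sigp).

Definition Lop' (beta : F) (t : 'I_N -> F) (x : F) (j : 'I_N) : mono :=
  fun a b =>
  let y := oplus beta x (t j) in
  if (a == 0) && (b == 0) then loc j (sigm *m sigp + y *: (sigp *m sigm))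
  else if (a == 0) && (b == 1) then loc j sigp
  else if (a == 1) && (b == 0) then loc j ((1 + beta * y) *: sigm)
  else loc j (sigp *m sigm).

(* M = L_N ... L_2 L_1 : folding over j = 1..N, each new factor multiplied on the left *)
Definition monodromy (L : 'I_N -> mono) : mono :=
  foldl (fun acc j => mono_mul (L j) acc) mono_id (enum 'I_N).

(* H = A + q D,  E = A' + q D' *)
Definition Hop (beta q : F) (t : 'I_N -> F) (x : F) : op :=
  let M := monodromy (Lop beta t x) in M 0 0 + q *: M 1 1.
Definition Eop (beta q : F) (t : 'I_N -> F) (x : F) : op :=
  let M := monodromy (Lop' beta t x) in M 0 0 + q *: M 1 1.

(* T(x_n) ... T(x_1) *)
Definition opprod (T : F -> op) (n : nat) (xs : 'I_n -> F) : op :=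
  foldl (fun acc i => T (xs i) *m acc) 1%:M (enum 'I_n).

Definition Zop beta q t (n : nat) (xs : 'I_n -> F) := opprod (Hop beta q t) xs.
Definition Zop' beta q t (n : nat) (xs : 'I_n -> F) := opprod (Eop beta q t) xs.

End Transfer.

(* Main.v *)
Require Import Defs.
From HB Require Import structures.
From mathcomp Require Import all_boot all_order all_algebra all_fingroup.
From mathcomp Require Import ring.
Set Implicit Arguments. Unset Strict Implicit. Unset Printing Implicit Defensive.
Import GRing.Theory.
Local Open Scope ring_scope.


Section Gen.
Variable S : comNzRingType.
Variable N : nat.
Definition opS := 'M[S]_(dimV N).
Definition locS (j : 'I_N) (m : 'M[S]_2) : opS :=
  \matrix_(i, i') (m (st i j) (st i' j) *
     ([forall k : 'I_N, (k != j) ==> (st i k == st i' k)])%:R).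
Definition sigmS : 'M[S]_2 := \matrix_(a, b) ((a == 0) && (b == 1))%:R.
Definition sigpS : 'M[S]_2 := \matrix_(a, b) ((a == 1) && (b == 0))%:R.
Definition monoS := 'I_2 -> 'I_2 -> opS.
Definition mono_mulS (P Q : monoS) : monoS := fun a b => \sum_(c < 2) P a c *m Q c b.
Definition mono_idS : monoS := fun a b => ((a == b)%:R)%:M.
Definition LS (beta : S) (y : 'I_N -> S) (j : 'I_N) : monoS :=
  fun a b =>
  let yj := y j in
  if (a == 0) && (b == 0) then locS j (sigpS *m sigmS + yj *: (sigmS *m sigpS))
  else if (a == 0) && (b == 1) then locS j ((1 + beta * yj) *: sigpS)
  else if (a == 1) && (b == 0) then locS j sigmS
  else locS j (sigmS *m sigpS).
Definition LS' (beta : S) (y : 'I_N -> S) (j : 'I_N) : monoS :=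
  fun a b =>
  let yj := y j in
  if (a == 0) && (b == 0) then locS j (sigmS *m sigpS + yj *: (sigpS *m sigmS))
  else if (a == 0) && (b == 1) then locS j sigpS
  else if (a == 1) && (b == 0) then locS j ((1 + beta * yj) *: sigmS)
  else locS j (sigpS *m sigmS).
Definition MonS (L : 'I_N -> monoS) (s : seq 'I_N) : monoS :=
  foldl (fun acc j => mono_mulS (L j) acc) mono_idS s.
Definition HS beta q y : opS := let M := MonS (LS beta y) (enum 'I_N) in M 0 0 + q *: M 1 1.
Definition ES beta q y : opS := let M := MonS (LS' beta y) (enum 'I_N) in M 0 0 + q *: M 1 1.
End Gen.

Lemma Hop_HS (F : fieldType) N beta q (t : 'I_N -> F) x :
  Hop beta q t x = HS beta q (fun j => ominus beta x (t j)).
Proof. reflexivity. Qed.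
Lemma Eop_ES (F : fieldType) N beta q (t : 'I_N -> F) x :
  Eop beta q t x = ES beta q (fun j => oplus beta x (t j)).
Proof. reflexivity. Qed.

Section LocLemmas.
Variable S : comNzRingType.
Variable N : nat.
Local Notation state := (state N).
Local Notation locS := (@locS S N).

Definition eqj (j : 'I_N) (u v : state) := [forall k : 'I_N, (k != j) ==> (u k == v k)].
Definition upd (u : state) (j : 'I_N) (c : 'I_2) : state := [ffun k => if k == j then c else u k].

Lemma sum_state (G : state -> S) : \sum_(k < dimV N) G (st k) = \sum_(s : state) G s.
Proof.
rewrite (reindex (@enum_rank _)) /=; last by apply: onW_bij; exact: enum_rank_bij.
by apply: eq_bigr => s _; rewrite /st enum_rankK.
Qed.


Lemma sum_one (u : state) j (G : 'I_2 -> S) :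
  \sum_(s : state) G (s j) * (eqj j u s)%:R = \sum_(c < 2) G c.
Proof.
rewrite (partition_big (fun s : state => s j) predT) //=.
apply: eq_bigr => c _.
rewrite (bigD1 (upd u j c)) /=; last by rewrite ffunE eqxx.
rewrite big1 ?addr0.
  rewrite ffunE eqxx.
  have -> : eqj j u (upd u j c) by apply/forallP => k; apply/implyP => hk; rewrite ffunE (negbTE hk).
  by rewrite mulr1.
move=> s /andP [/eqP hsj hne].
case e: (eqj j u s); last by rewrite mulr0.
case/eqP: hne; apply/ffunP => k; rewrite ffunE.
case: eqP => [->|/eqP hk] //.
by move/forallP: e => /(_ k); rewrite hk /= => /eqP.
Qed.

Lemma eqj_trans j u v w : eqj j u v -> eqj j v w = eqj j u w.
Proof.
move=> /forallP h; apply/forallP/forallP => h2 k; apply/implyP => hk.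
  by move: (h k) (h2 k); rewrite hk /= => /eqP -> .
by move: (h k) (h2 k); rewrite hk /= => /eqP <- .
Qed.

Lemma locS_mul j a b : locS j a *m locS j b = locS j (a *m b).
Proof.
apply/matrixP => i i'; rewrite !mxE.
under eq_bigr => k _ do rewrite !mxE.
pose G := fun s : state => a (st i j) (s j) * (eqj j (st i) s)%:R * (b (s j) (st i' j) * (eqj j s (st i'))%:R).
rewrite (sum_state G) /G.
transitivity (\sum_(s : state) (a (st i j) (s j) * b (s j) (st i' j) * (eqj j (st i) (st i'))%:R) * (eqj j (st i) s)%:R).
  apply: eq_bigr => s _.
  case e: (eqj j (st i) s); last by rewrite !mulr0 mul0r.
  by rewrite (eqj_trans _ e); ring.
rewrite (sum_one (st i) j (fun c => a (st i j) c * b c (st i' j) * (eqj j (st i) (st i'))%:R)).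
rewrite -big_distrl /=; congr (_ * _).
Qed.

Definition agree2 j k (u v : state) := [forall l : 'I_N, ((l != j) && (l != k)) ==> (u l == v l)].

Lemma locS_mul_neq j k a b : j != k ->
  (locS j a *m locS k b) = \matrix_(i, i') (a (st i j) (st i' j) * b (st i k) (st i' k) * (agree2 j k (st i) (st i'))%:R).
Proof.
move=> hjk; apply/matrixP => i i'; rewrite !mxE.
under eq_bigr => l _ do rewrite !mxE.
pose G := fun s : state => a (st i j) (s j) * (eqj j (st i) s)%:R * (b (s k) (st i' k) * (eqj k s (st i'))%:R).
rewrite (sum_state G) /G.
transitivity (\sum_(s : state) (a (st i j) (s j) * b (st i k) (st i' k) * (s j == st i' j)%:R * (agree2 j k (st i) (st i'))%:R) * (eqj j (st i) s)%:R).
  apply: eq_bigr => s _.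
  case e: (eqj j (st i) s); last by rewrite !mulr0 mul0r.
  have hk : s k = st i k.
    by move/forallP: e => /(_ k); rewrite eq_sym hjk /= => /eqP.
  have -> : eqj k s (st i') = (s j == st i' j) && agree2 j k (st i) (st i').
    apply/idP/idP.
      move/forallP => h; apply/andP; split.
        by move: (h j); rewrite hjk /=.
      apply/forallP => l; apply/implyP => /andP [hl1 hl2].
      move/forallP: e => /(_ l); rewrite hl1 /= => /eqP ->.
      by move: (h l); rewrite hl2.
    move=> /andP [/eqP hj /forallP h]; apply/forallP => l; apply/implyP => hl2.
    case: (eqVneq l j) => [->|hl1]; first by rewrite hj.
    move/forallP: e => /(_ l); rewrite hl1 /= => /eqP <-.
    by move: (h l); rewrite hl1 hl2.
  rewrite hk -mulnb natrM; ring.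
rewrite (sum_one (st i) j (fun c => a (st i j) c * b (st i k) (st i' k) * (c == st i' j)%:R * (agree2 j k (st i) (st i'))%:R)).
rewrite (bigD1 (st i' j)) //= big1 ?addr0; first by rewrite eqxx mulr1.
by move=> c /negbTE ->; rewrite mulr0 mul0r.
Qed.

Lemma agree2C j k u v : agree2 j k u v = agree2 k j u v.
Proof. by apply: eq_forallb => l; rewrite andbC. Qed.


Lemma locS_comm j k a b : j != k -> locS j a *m locS k b = locS k b *m locS j a.
Proof.
move=> hjk; have hkj : k != j by rewrite eq_sym.
rewrite (locS_mul_neq _ _ hjk) (locS_mul_neq _ _ hkj).
by apply/matrixP => i i'; rewrite !mxE agree2C; congr (_ * _); rewrite mulrC.
Qed.

Lemma locSD j a b : locS j (a + b) = locS j a + locS j b.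
Proof. by apply/matrixP => i i'; rewrite !mxE mulrDl. Qed.
Lemma locS0 j : locS j 0 = 0.
Proof. by apply/matrixP => i i'; rewrite !mxE mul0r. Qed.
Lemma locSZ j c a : locS j (c *: a) = c *: locS j a.
Proof. by apply/matrixP => i i'; rewrite !mxE mulrA. Qed.
Lemma locS_sum j (I : finType) (F : I -> 'M[S]_2) : locS j (\sum_i F i) = \sum_i locS j (F i).
Proof. exact: (big_morph _ (locSD j) (locS0 j)). Qed.

End LocLemmas.


Section Train.
Variable S : comNzRingType.
Variable N : nat.
Local Notation opS := (opS S N).
Local Notation monoS := (monoS S N).
Local Notation locS := (@locS S N).
Local Notation MonS := (@MonS S N).
Local Notation mono_mulS := (@mono_mulS S N).
Local Notation mono_idS := (@mono_idS S N).

Definition isloc (L : 'I_N -> monoS) := forall k a b, exists m, L k a b = locS k m.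

Lemma MonS_rcons L s k : MonS L (rcons s k) = mono_mulS (L k) (MonS L s).
Proof. by rewrite /MonS foldl_rcons. Qed.

Lemma MonS_comm L (hL : isloc L) s j m : j \notin s ->
  forall a b, MonS L s a b *m locS j m = locS j m *m MonS L s a b.
Proof.
elim/last_ind: s => [|s k IH] hj a b.
  by rewrite /MonS /= /mono_idS scalar_mxC.
rewrite MonS_rcons /mono_mulS mulmx_suml mulmx_sumr.
have [hjs hjk] : j \notin s /\ j != k.
  by move: hj; rewrite -cats1 mem_cat inE negb_or => /andP [? ?].
apply: eq_bigr => c _.
rewrite -mulmxA IH // !mulmxA; congr (_ *m _).
have [m' ->] := hL k a c.
by rewrite locS_comm // eq_sym.
Qed.

Definition P2 := ('I_2 * 'I_2)%type.
Definition Xt (P Q : monoS) (A B : P2) : opS := P A.1 B.1 *m Q A.2 B.2.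
Definition Yt (P Q : monoS) (A B : P2) : opS := Q A.2 B.2 *m P A.1 B.1.
Definition Rmul (R : P2 -> P2 -> S) (X : P2 -> P2 -> opS) A B := \sum_(C : P2) R A C *: X C B.
Definition mulR (X : P2 -> P2 -> opS) (R : P2 -> P2 -> S) A B := \sum_(C : P2) R C B *: X A C.
Definition mm4 (X Y : P2 -> P2 -> opS) A B := \sum_(C : P2) X A C *m Y C B.
Definition RTT R P Q := forall A B, Rmul R (Xt P Q) A B = mulR (Yt P Q) R A B.

Lemma sum_pair (F : P2 -> opS) : \sum_(C : P2) F C = \sum_(c1 < 2) \sum_(c2 < 2) F (c1, c2).
Proof. by rewrite pair_bigA; apply: eq_bigr => -[]. Qed.

Lemma Xt_mul L1 L2 P0 Q0 :
  (forall a b c d, P0 a b *m L2 c d = L2 c d *m P0 a b) ->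
  forall A B, Xt (mono_mulS L1 P0) (mono_mulS L2 Q0) A B = mm4 (Xt L1 L2) (Xt P0 Q0) A B.
Proof.
move=> hc A B; rewrite /Xt /mm4 /mono_mulS sum_pair mulmx_suml.
apply: eq_bigr => c1 _; rewrite mulmx_sumr; apply: eq_bigr => c2 _ /=.
by rewrite !mulmxA -(mulmxA (L1 _ _)) hc !mulmxA.
Qed.

Lemma Yt_mul L1 L2 P0 Q0 :
  (forall a b c d, Q0 a b *m L1 c d = L1 c d *m Q0 a b) ->
  forall A B, Yt (mono_mulS L1 P0) (mono_mulS L2 Q0) A B = mm4 (Yt L1 L2) (Yt P0 Q0) A B.
Proof.
move=> hc A B; rewrite /Yt /mm4 /mono_mulS sum_pair.
rewrite mulmx_suml; rewrite exchange_big /=.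
apply: eq_bigr => c1 _; rewrite mulmx_sumr; apply: eq_bigr => c2 _ /=.
by rewrite !mulmxA -(mulmxA (L2 _ _)) hc !mulmxA.
Qed.

Lemma Rmul_mm4 R X Z A B : Rmul R (mm4 X Z) A B = mm4 (Rmul R X) Z A B.
Proof.
rewrite /Rmul /mm4.
under eq_bigr => C _ do rewrite scaler_sumr.
rewrite exchange_big /=; apply: eq_bigr => D _.
by rewrite mulmx_suml; apply: eq_bigr => C _; rewrite scalemxAl.
Qed.

Lemma mm4_mulR Y R Z A B : mm4 (mulR Y R) Z A B = mm4 Y (Rmul R Z) A B.
Proof.
rewrite /Rmul /mm4 /mulR.
under eq_bigr => C _ do rewrite mulmx_suml.
rewrite exchange_big /=; apply: eq_bigr => D _.
by rewrite mulmx_sumr; apply: eq_bigr => C _; rewrite -scalemxAl scalemxAr.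
Qed.

Lemma mulR_mm4 Y W R A B : mulR (mm4 Y W) R A B = mm4 Y (mulR W R) A B.
Proof.
rewrite /mulR /mm4.
under eq_bigr => C _ do rewrite scaler_sumr.
rewrite exchange_big /=; apply: eq_bigr => D _.
by rewrite mulmx_sumr; apply: eq_bigr => C _; rewrite scalemxAr.
Qed.

Lemma mm4_eql X X' Z : (forall A B, X A B = X' A B) -> forall A B, mm4 X Z A B = mm4 X' Z A B.
Proof. by move=> h A B; apply: eq_bigr => C _; rewrite h. Qed.
Lemma mm4_eqr X Z Z' : (forall A B, Z A B = Z' A B) -> forall A B, mm4 X Z A B = mm4 X Z' A B.
Proof. by move=> h A B; apply: eq_bigr => C _; rewrite h. Qed.

Lemma RTT_id R : RTT R mono_idS mono_idS.
Proof.
have hX : forall C B : P2, Xt mono_idS mono_idS C B = ((C == B)%:R)%:M.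
  move=> [c1 c2] [b1 b2]; rewrite /Xt /mono_idS /= -scalar_mxM xpair_eqE.
  by case: (c1 == b1); case: (c2 == b2); rewrite ?mulr1 ?mulr0 ?mul0r.
have hY : forall C B : P2, Yt mono_idS mono_idS C B = ((C == B)%:R)%:M.
  move=> [c1 c2] [b1 b2]; rewrite /Yt /mono_idS /= -scalar_mxM xpair_eqE.
  by case: (c1 == b1); case: (c2 == b2); rewrite ?mulr1 ?mulr0 ?mul0r.
move=> A B; rewrite /Rmul /mulR.
rewrite (bigD1 B) //= big1; last by move=> C /negbTE hC; rewrite hX hC scale_scalar_mx mulr0 raddf0.
rewrite (bigD1 A) //= [X in _ = _ + X]big1; last by move=> C /negbTE hC; rewrite hY eq_sym hC scale_scalar_mx mulr0 raddf0.
by rewrite hX hY !eqxx.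
Qed.

Lemma train R L1 L2 (h1 : isloc L1) (h2 : isloc L2) (hR : forall j, RTT R (L1 j) (L2 j)) s :
  uniq s -> RTT R (MonS L1 s) (MonS L2 s).
Proof.
elim/last_ind: s => [|s k IH]; first by move=> _; exact: RTT_id.
rewrite rcons_uniq => /andP [hk hs] A B.
have hcP : forall a b c d, MonS L1 s a b *m L2 k c d = L2 k c d *m MonS L1 s a b.
  by move=> a b c d; have [m ->] := h2 k c d; exact: MonS_comm.
have hcQ : forall a b c d, MonS L2 s a b *m L1 k c d = L1 k c d *m MonS L2 s a b.
  by move=> a b c d; have [m ->] := h1 k c d; exact: MonS_comm.
rewrite !MonS_rcons.
rewrite /Rmul.
under eq_bigr => C _ do rewrite (Xt_mul _ _ hcP).
rewrite -/(Rmul R (mm4 (Xt (L1 k) (L2 k)) (Xt (MonS L1 s) (MonS L2 s))) A B).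
rewrite Rmul_mm4 (mm4_eql _ (hR k)) mm4_mulR (mm4_eqr _ (IH hs)) -mulR_mm4.
by apply: eq_bigr => C _; rewrite (Yt_mul _ _ hcQ).
Qed.

End Train.


Section Extract.
Variable S : comNzRingType.
Variable N : nat.
Local Notation opS := (opS S N).
Local Notation monoS := (monoS S N).

Definition o1 : 'I_2 := Ordinal (erefl : (1 < 2)%N).
Definition p00 : P2 := (ord0, ord0).
Definition p01 : P2 := (ord0, o1).
Definition p10 : P2 := (o1, ord0).
Definition p11 : P2 := (o1, o1).
Lemma ord2_case (P : 'I_2 -> Prop) : P ord0 -> P o1 -> forall i, P i.
Proof. by move=> h0 h1 [[|[|//]] hi]; [rewrite (_ : Ordinal hi = ord0) | rewrite (_ : Ordinal hi = o1)] => //; apply: val_inj. Qed.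
Lemma o0E : (0 : 'I_2) = ord0. Proof. by apply: val_inj. Qed.
Lemma o1E : (1 : 'I_2) = o1. Proof. by apply: val_inj. Qed.

Lemma sum4 (V : nmodType) (F : P2 -> V) : \sum_(C : P2) F C = F p00 + F p01 + F p10 + F p11.
Proof.
transitivity (\sum_(i < 2) \sum_(j < 2) F (i, j)); first by rewrite pair_bigA; apply: eq_bigr => -[].
rewrite !big_ord_recl !big_ord0 /= !addr0 addrA.
have e1 : lift ord0 ord0 = o1 :> 'I_2 by apply: val_inj.
by rewrite /p00 /p01 /p10 /p11 e1.
Qed.

Definition Rblk (r0 r3 b11 b12 b21 b22 : S) (A C : P2) : S :=
  match nat_of_ord A.1, nat_of_ord A.2, nat_of_ord C.1, nat_of_ord C.2 with
  | 0,0,0,0 => r0 | 1,1,1,1 => r3 | 0,1,0,1 => b11 | 0,1,1,0 => b12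
  | 1,0,0,1 => b21 | 1,0,1,0 => b22 | _,_,_,_ => 0 end.

Lemma mid_lemma (b11 b12 b21 b22 x11 x12 x21 x22 y11 y12 y21 y22 : S) :
  b11 * x11 + b12 * x21 = b11 * y11 + b21 * y12 ->
  b11 * x12 + b12 * x22 = b12 * y11 + b22 * y12 ->
  b21 * x11 + b22 * x21 = b11 * y21 + b21 * y22 ->
  b21 * x12 + b22 * x22 = b12 * y21 + b22 * y22 ->
  (b11 * b22 - b12 * b21) * (x11 + x22 - y11 - y22) = 0.
Proof.
move=> e1 e2 e3 e4.
transitivity (b22 * ((b11 * x11 + b12 * x21) - (b11 * y11 + b21 * y12))
            - b21 * ((b11 * x12 + b12 * x22) - (b12 * y11 + b22 * y12))
            - b12 * ((b21 * x11 + b22 * x21) - (b11 * y21 + b21 * y22))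
            + b11 * ((b21 * x12 + b22 * x22) - (b12 * y21 + b22 * y22))); first by ring.
by rewrite e1 e2 e3 e4 !subrr !mulr0 !subr0 addr0.
Qed.

Lemma extract r0 r3 b11 b12 b21 b22 (P Q : monoS) :
  RTT (Rblk r0 r3 b11 b12 b21 b22) P Q ->
  [/\ r0 *: (P 0 0 *m Q 0 0 - Q 0 0 *m P 0 0) = 0,
      r3 *: (P 1 1 *m Q 1 1 - Q 1 1 *m P 1 1) = 0 &
      (b11 * b22 - b12 * b21) *: (P 0 0 *m Q 1 1 + P 1 1 *m Q 0 0 - Q 1 1 *m P 0 0 - Q 0 0 *m P 1 1) = 0].
Proof.
move=> h; rewrite o0E o1E.
have ev : forall A B, Rmul (Rblk r0 r3 b11 b12 b21 b22) (Xt P Q) A B = mulR (Yt P Q) (Rblk r0 r3 b11 b12 b21 b22) A B := h.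
have e00 := ev p00 p00; have e33 := ev p11 p11.
have e11 := ev p01 p01; have e12 := ev p01 p10; have e21 := ev p10 p01; have e22 := ev p10 p10.
rewrite /Rmul /mulR !sum4 /Rblk /= !scale0r ?addr0 ?add0r in e00 e33 e11 e12 e21 e22.
split.
- by rewrite /Xt /Yt /= in e00; rewrite scalerBr e00 subrr.
- by rewrite /Xt /Yt /= in e33; rewrite scalerBr e33 subrr.
apply/matrixP => i j; rewrite !mxE.
move: e11 e12 e21 e22 => /(congr1 (fun M : opS => M i j)) e11 /(congr1 (fun M : opS => M i j)) e12
  /(congr1 (fun M : opS => M i j)) e21 /(congr1 (fun M : opS => M i j)) e22.
rewrite !mxE /p01 /p10 /= in e11 e12 e21 e22.
exact: (mid_lemma e11 e12 e21 e22).
Qed.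
End Extract.


Section Local.
Variable S : comNzRingType.
Variable N : nat.
Local Notation opS := (opS S N).
Local Notation monoS := (monoS S N).
Local Notation locS := (@locS S N).

Definition lentH (b y : S) (a c i k : nat) : S :=
  match a, c, i, k with
  | 0,0,0,0 => y | 0,0,1,1 => 1
  | 0,1,1,0 => 1 + b * y
  | 1,0,0,1 => 1
  | 1,1,0,0 => 1
  | _,_,_,_ => 0 end.
Definition lentE (b y : S) (a c i k : nat) : S :=
  match a, c, i, k with
  | 0,0,0,0 => 1 | 0,0,1,1 => y
  | 0,1,1,0 => 1
  | 1,0,0,1 => 1 + b * y
  | 1,1,1,1 => 1
  | _,_,_,_ => 0 end.
Definition LmH b y (a c : 'I_2) : 'M[S]_2 := \matrix_(i, k) lentH b y a c i k.
Definition LmE b y (a c : 'I_2) : 'M[S]_2 := \matrix_(i, k) lentE b y a c i k.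

Ltac ord2 x := case: x => [[|[|//]] ?].

Lemma LS_Lm b (y : 'I_N -> S) j a c : LS b y j a c = locS j (LmH b (y j) a c).
Proof.
rewrite /LS; ord2 a; ord2 c => /=; congr locS; apply/matrixP => i k; rewrite !mxE;
  ord2 i; ord2 k; rewrite /= ?big_ord_recl ?big_ord0 /= ?mxE /=; ring.
Qed.

Lemma LS'_Lm b (y : 'I_N -> S) j a c : LS' b y j a c = locS j (LmE b (y j) a c).
Proof.
rewrite /LS'; ord2 a; ord2 c => /=; congr locS; apply/matrixP => i k; rewrite !mxE;
  ord2 i; ord2 k; rewrite /= ?big_ord_recl ?big_ord0 /= ?mxE /=; ring.
Qed.

Lemma loc_RTT R j (m1 m2 : 'I_2 -> 'I_2 -> 'M[S]_2) :
  (forall A B : P2, \sum_(C : P2) R A C *: (m1 C.1 B.1 *m m2 C.2 B.2) =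
                    \sum_(C : P2) R C B *: (m2 A.2 C.2 *m m1 A.1 C.1)) ->
  RTT R (fun a c => locS j (m1 a c)) (fun a c => locS j (m2 a c)).
Proof.
move=> h A B; rewrite /Rmul /mulR /Xt /Yt.
under eq_bigr => C _ do rewrite locS_mul -locSZ.
under [RHS]eq_bigr => C _ do rewrite locS_mul -locSZ.
by rewrite -!locS_sum h.
Qed.

Lemma RLL_HH b y y' (kp : S) (A B : P2) :
  \sum_(C : P2) Rblk (kp*(1+b*y)) (kp*(1+b*y)) 0 (kp*(1+b*y)) (kp*(1+b*y')) (kp*(y'-y)) A C *: (LmH b y C.1 B.1 *m LmH b y' C.2 B.2) =
  \sum_(C : P2) Rblk (kp*(1+b*y)) (kp*(1+b*y)) 0 (kp*(1+b*y)) (kp*(1+b*y')) (kp*(y'-y)) C B *: (LmH b y' A.2 C.2 *m LmH b y A.1 C.1).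
Proof.
rewrite !sum4.
apply/matrixP => i k.
rewrite !mxE.
rewrite !big_ord_recl !big_ord0.
rewrite !mxE /lentH /Rblk /p00 /p01 /p10 /p11.
(move: A B i k => [a1 a2] [b1 b2] i k;
  elim/ord2_case: a1; elim/ord2_case: a2; elim/ord2_case: b1; elim/ord2_case: b2;
  elim/ord2_case: i; elim/ord2_case: k).
all: rewrite /=.
all: ring.
Qed.

Lemma RLL_EE b z z' (kp : S) (A B : P2) :
  \sum_(C : P2) Rblk (kp*(1+b*z')) (kp*(1+b*z')) (kp*(z-z')) (kp*(1+b*z')) (kp*(1+b*z)) 0 A C *: (LmE b z C.1 B.1 *m LmE b z' C.2 B.2) =
  \sum_(C : P2) Rblk (kp*(1+b*z')) (kp*(1+b*z')) (kp*(z-z')) (kp*(1+b*z')) (kp*(1+b*z)) 0 C B *: (LmE b z' A.2 C.2 *m LmE b z A.1 C.1).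
Proof.
rewrite !sum4.
apply/matrixP => i k.
rewrite !mxE.
rewrite !big_ord_recl !big_ord0.
rewrite !mxE /lentH /Rblk /p00 /p01 /p10 /p11.
(move: A B i k => [a1 a2] [b1 b2] i k;
  elim/ord2_case: a1; elim/ord2_case: a2; elim/ord2_case: b1; elim/ord2_case: b2;
  elim/ord2_case: i; elim/ord2_case: k).
all: rewrite /=.
all: ring.
Qed.

Lemma RLL_HE b y z (A B : P2) :
  \sum_(C : P2) Rblk (y+z+b*y*z) 0 1 (1+b*(y+z+b*y*z)) 1 1 A C *: (LmH b y C.1 B.1 *m LmE b z C.2 B.2) =
  \sum_(C : P2) Rblk (y+z+b*y*z) 0 1 (1+b*(y+z+b*y*z)) 1 1 C B *: (LmE b z A.2 C.2 *m LmH b y A.1 C.1).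
Proof.
rewrite !sum4.
apply/matrixP => i k.
rewrite !mxE.
rewrite !big_ord_recl !big_ord0.
rewrite !mxE /lentH /Rblk /p00 /p01 /p10 /p11.
(move: A B i k => [a1 a2] [b1 b2] i k;
  elim/ord2_case: a1; elim/ord2_case: a2; elim/ord2_case: b1; elim/ord2_case: b2;
  elim/ord2_case: i; elim/ord2_case: k).
all: rewrite /=.
all: ring.
Qed.

Lemma RLL_EH b y z (A B : P2) :
  \sum_(C : P2) Rblk 0 1 0 0 0 0 A C *: (LmE b z C.1 B.1 *m LmH b y C.2 B.2) =
  \sum_(C : P2) Rblk 0 1 0 0 0 0 C B *: (LmH b y A.2 C.2 *m LmE b z A.1 C.1).
Proof.
rewrite !sum4.
apply/matrixP => i k.
rewrite !mxE.
rewrite !big_ord_recl !big_ord0.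
rewrite !mxE /lentH /Rblk /p00 /p01 /p10 /p11.
(move: A B i k => [a1 a2] [b1 b2] i k;
  elim/ord2_case: a1; elim/ord2_case: a2; elim/ord2_case: b1; elim/ord2_case: b2;
  elim/ord2_case: i; elim/ord2_case: k).
all: rewrite /=.
all: ring.
Qed.

End Local.


Section Main.
Variable S : comNzRingType.
Variable N : nat.
Local Notation opS := (opS S N).
Local Notation monoS := (monoS S N).
Local Notation locS := (@locS S N).
Local Notation MonS := (@MonS S N).

Lemma RTT_ext R (P Q P' Q' : monoS) : (forall a c, P a c = P' a c) -> (forall a c, Q a c = Q' a c) ->
  RTT R P' Q' -> RTT R P Q.
Proof.
move=> hP hQ h A B; rewrite /Rmul /mulR /Xt /Yt.
under eq_bigr => C _ do rewrite hP hQ.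
under [RHS]eq_bigr => C _ do rewrite hP hQ.
exact: h A B.
Qed.

Lemma isloc_LS b (y : 'I_N -> S) : isloc (LS b y).
Proof. by move=> k a c; exists (LmH b (y k) a c); exact: LS_Lm. Qed.
Lemma isloc_LS' b (y : 'I_N -> S) : isloc (LS' b y).
Proof. by move=> k a c; exists (LmE b (y k) a c); exact: LS'_Lm. Qed.

Lemma transfer_comm (A D A' D' : opS) (q c : S) :
  c *: (A *m A' - A' *m A) = 0 -> c *: (D *m D' - D' *m D) = 0 ->
  c *: (A *m D' + D *m A' - D' *m A - A' *m D) = 0 ->
  c *: ((A + q *: D) *m (A' + q *: D') - (A' + q *: D') *m (A + q *: D)) = 0.
Proof.
move=> h0 h3 h1.
have -> : (A + q *: D) *m (A' + q *: D') - (A' + q *: D') *m (A + q *: D) =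
   (A *m A' - A' *m A) + q *: (A *m D' + D *m A' - D' *m A - A' *m D) + (q * q) *: (D *m D' - D' *m D).
  rewrite !mulmxDl !mulmxDr -!scalemxAl -!scalemxAr !scalerA.
  move: (A *m A') (A' *m A) (A *m D') (D *m A') (D' *m A) (A' *m D) (D *m D') (D' *m D) => x1 x2 x3 x4 x5 x6 x7 x8.
  apply/matrixP => i j; rewrite !mxE; ring.
move: h0 h1 h3; move: (A *m A' - A' *m A) (A *m D' + D *m A' - D' *m A - A' *m D) (D *m D' - D' *m D) => X0 X1 X3 h0 h1 h3.
by rewrite !scalerDr !scalerA !(mulrC c) -!scalerA h0 h1 h3 !scaler0 !addr0.
Qed.

Lemma HH_S (b q : S) (y y' : 'I_N -> S) (lam mu nu : S) (kp : 'I_N -> S) :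
  (forall j, lam = kp j * (1 + b * y j)) -> (forall j, mu = kp j * (1 + b * y' j)) ->
  (forall j, nu = kp j * (y' j - y j)) ->
  (lam * mu) *: (HS b q y *m HS b q y' - HS b q y' *m HS b q y) = 0.
Proof.
move=> hl hm hn.
have hR : forall j, RTT (Rblk lam lam 0 lam mu nu) (LS b y j) (LS b y' j).
  move=> j; apply: (RTT_ext (P' := fun a c => locS j (LmH b (y j) a c)) (Q' := fun a c => locS j (LmH b (y' j) a c))).
  - by move=> a c; exact: LS_Lm.
  - by move=> a c; exact: LS_Lm.
  by apply: loc_RTT => A B; rewrite (hl j) (hm j) (hn j); exact: RLL_HH.
have := train (isloc_LS b y) (isloc_LS b y') hR (enum_uniq 'I_N).
move=> /extract [h0 h3 h1].
rewrite /HS; apply: transfer_comm.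
- by rewrite mulrC -scalerA h0 scaler0.
- by rewrite mulrC -scalerA h3 scaler0.
- move: h1; rewrite mul0r sub0r scaleNr => /eqP; rewrite oppr_eq0 => /eqP.
  by [].
Qed.

Lemma EE_S (b q : S) (z z' : 'I_N -> S) (lam mu nu : S) (kp : 'I_N -> S) :
  (forall j, lam = kp j * (1 + b * z j)) -> (forall j, mu = kp j * (1 + b * z' j)) ->
  (forall j, nu = kp j * (z j - z' j)) ->
  (mu * lam) *: (ES b q z *m ES b q z' - ES b q z' *m ES b q z) = 0.
Proof.
move=> hl hm hn.
have hR : forall j, RTT (Rblk mu mu nu mu lam 0) (LS' b z j) (LS' b z' j).
  move=> j; apply: (RTT_ext (P' := fun a c => locS j (LmE b (z j) a c)) (Q' := fun a c => locS j (LmE b (z' j) a c))).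
  - by move=> a c; exact: LS'_Lm.
  - by move=> a c; exact: LS'_Lm.
  by apply: loc_RTT => A B; rewrite (hl j) (hm j) (hn j); exact: RLL_EE.
have := train (isloc_LS' b z) (isloc_LS' b z') hR (enum_uniq 'I_N).
move=> /extract [h0 h3 h1].
rewrite /ES; apply: transfer_comm.
- by rewrite mulrC -scalerA h0 scaler0.
- by rewrite mulrC -scalerA h3 scaler0.
- move: h1; rewrite mulr0 sub0r scaleNr => /eqP; rewrite oppr_eq0 => /eqP.
  by [].
Qed.

Lemma HE_S (b q : S) (y z : 'I_N -> S) (w : S) :
  (forall j, w = y j + z j + b * y j * z j) ->
  (b * w) *: (HS b q y *m ES b q z - ES b q z *m HS b q y) = 0.
Proof.
move=> hw.
have hR1 : forall j, RTT (Rblk w 0 1 (1 + b * w) 1 1) (LS b y j) (LS' b z j).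
  move=> j; apply: (RTT_ext (P' := fun a c => locS j (LmH b (y j) a c)) (Q' := fun a c => locS j (LmE b (z j) a c))).
  - by move=> a c; exact: LS_Lm.
  - by move=> a c; exact: LS'_Lm.
  by apply: loc_RTT => A B; rewrite (hw j); exact: RLL_HE.
have hR2 : forall j, RTT (Rblk 0 1 0 0 0 0) (LS' b z j) (LS b y j).
  move=> j; apply: (RTT_ext (P' := fun a c => locS j (LmE b (z j) a c)) (Q' := fun a c => locS j (LmH b (y j) a c))).
  - by move=> a c; exact: LS'_Lm.
  - by move=> a c; exact: LS_Lm.
  by apply: loc_RTT => A B; exact: (RLL_EH b (y j) (z j)).
have := train (isloc_LS b y) (isloc_LS' b z) hR1 (enum_uniq 'I_N).
move=> /extract [h0 _ h1].
have := train (isloc_LS' b z) (isloc_LS b y) hR2 (enum_uniq 'I_N).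
move=> /extract [_ h3 _].
rewrite /HS /ES; apply: transfer_comm.
- by rewrite -scalerA h0 scaler0.
- move: h3; rewrite scale1r => /eqP; rewrite subr_eq0 => /eqP ->.
  by rewrite subrr scaler0.
- move: h1; rewrite (_ : 1 * 1 - (1 + b * w) * 1 = - (b * w)); last by ring.
  by rewrite scaleNr => /eqP; rewrite oppr_eq0 => /eqP.
Qed.
End Main.


Section Trunc.
Variable F : fieldType.
Record tr := Tr { t0 : F; t1 : F; t2 : F }.
Definition tr2p (a : tr) := (t0 a, t1 a, t2 a).
Definition p2tr (p : F * F * F) := Tr p.1.1 p.1.2 p.2.
Lemma tr2pK : cancel tr2p p2tr. Proof. by case. Qed.
HB.instance Definition _ := Equality.copy tr (can_type tr2pK).
HB.instance Definition _ := Choice.copy tr (can_type tr2pK).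

Definition tr0 := Tr 0 0 0.
Definition tradd a b := Tr (t0 a + t0 b) (t1 a + t1 b) (t2 a + t2 b).
Definition tropp a := Tr (- t0 a) (- t1 a) (- t2 a).
Lemma traddA : associative tradd. Proof. by move=> [? ? ?] [? ? ?] [? ? ?]; rewrite /tradd /=; congr Tr; ring. Qed.
Lemma traddC : commutative tradd. Proof. by move=> [? ? ?] [? ? ?]; rewrite /tradd /=; congr Tr; ring. Qed.
Lemma tradd0 : left_id tr0 tradd. Proof. by move=> [? ? ?]; rewrite /tradd /=; congr Tr; ring. Qed.
Lemma traddN : left_inverse tr0 tropp tradd. Proof. by move=> [? ? ?]; rewrite /tradd /=; congr Tr; ring. Qed.
HB.instance Definition _ := GRing.isZmodule.Build tr traddA traddC tradd0 traddN.

Definition tr1 := Tr 1 0 0.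
Definition trmul a b := Tr (t0 a * t0 b) (t0 a * t1 b + t1 a * t0 b) (t0 a * t2 b + t1 a * t1 b + t2 a * t0 b).
Lemma trmulA : associative trmul. Proof. by move=> [? ? ?] [? ? ?] [? ? ?]; rewrite /trmul /=; congr Tr; ring. Qed.
Lemma trmulC : commutative trmul. Proof. by move=> [? ? ?] [? ? ?]; rewrite /trmul /=; congr Tr; ring. Qed.
Lemma trmul1 : left_id tr1 trmul. Proof. by move=> [? ? ?]; rewrite /trmul /=; congr Tr; ring. Qed.
Lemma trmulDl : left_distributive trmul tradd. Proof. by move=> [? ? ?] [? ? ?] [? ? ?]; rewrite /trmul /tradd /=; congr Tr; ring. Qed.
Lemma tr1_neq0 : tr1 != tr0. Proof. by apply/eqP => -[] /eqP; rewrite oner_eq0. Qed.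
HB.instance Definition _ := GRing.Zmodule_isComNzRing.Build tr trmulA trmulC trmul1 trmulDl tr1_neq0.

Lemma tr_addE a b : a + b = Tr (t0 a + t0 b) (t1 a + t1 b) (t2 a + t2 b). Proof. by []. Qed.
Lemma tr_mulE a b : a * b = Tr (t0 a * t0 b) (t0 a * t1 b + t1 a * t0 b) (t0 a * t2 b + t1 a * t1 b + t2 a * t0 b). Proof. by []. Qed.
Lemma tr_oneE : 1 = Tr 1 0 0 :> tr. Proof. by []. Qed.
Lemma tr_zeroE : 0 = Tr 0 0 0 :> tr. Proof. by []. Qed.
Lemma tr_oppE a : - a = Tr (- t0 a) (- t1 a) (- t2 a). Proof. by []. Qed.

Lemma t0_is_zmod : zmod_morphism t0. Proof. by move=> [? ? ?] [? ? ?]. Qed.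
HB.instance Definition _ := GRing.isZmodMorphism.Build tr F (@t0) t0_is_zmod.
Lemma t0_is_monoid : monoid_morphism (@t0).
Proof. by split => // -[? ? ?] [? ? ?]. Qed.
HB.instance Definition _ := GRing.isMonoidMorphism.Build tr F (@t0) t0_is_monoid.

Definition t0m : {rmorphism tr -> F} := @t0.

Lemma tr_cancel n m (c : tr) (M : 'M[tr]_(n, m)) : c != 0 -> c *: M = 0 -> map_mx t0m M = 0.
Proof.
move=> hc hM; apply/matrixP => i j; rewrite !mxE.
have := congr1 (fun A : 'M[tr]_(n, m) => A i j) hM; rewrite !mxE; clear hM.
move: (M i j) => [x0 x1 x2]; move: hc; case: c => c0 c1 c2 hc.
rewrite tr_mulE tr_zeroE /= => -[e0 e1 e2].
have [h0|h0] := eqVneq c0 0.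
  have [h1|h1] := eqVneq c1 0.
    have h2 : c2 != 0 by apply: contraNneq hc => h2; rewrite h0 h1 h2 tr_zeroE.
    move: e2; rewrite h0 h1 !mul0r !add0r => /eqP; rewrite mulf_eq0 (negbTE h2) /= => /eqP.
    done.
  move: e1; rewrite h0 mul0r add0r => /eqP; rewrite mulf_eq0 (negbTE h1) /= => /eqP.
  done.
by move: e0 => /eqP; rewrite mulf_eq0 (negbTE h0) /= => /eqP.
Qed.
End Trunc.


Section Nat.
Variables (S S' : comNzRingType) (f : {rmorphism S -> S'}) (N : nat).

Lemma map_locS j m : map_mx f (@locS S N j m) = locS j (map_mx f m).
Proof. by apply/matrixP => i k; rewrite !mxE rmorphM rmorph_nat. Qed.
Lemma map_sigmS : map_mx f (sigmS S) = sigmS S'.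
Proof. by apply/matrixP => i k; rewrite !mxE rmorph_nat. Qed.
Lemma map_sigpS : map_mx f (sigpS S) = sigpS S'.
Proof. by apply/matrixP => i k; rewrite !mxE rmorph_nat. Qed.

Lemma map_LS b (y : 'I_N -> S) j a c : map_mx f (LS b y j a c) = LS (f b) (fun k => f (y k)) j a c.
Proof.
rewrite /LS; case: ifP => _; last case: ifP => _; last case: ifP => _;
  by rewrite map_locS ?map_mxD ?map_mxZ ?map_mxM ?map_sigmS ?map_sigpS ?rmorphD ?rmorphM ?rmorph1.
Qed.
Lemma map_LS' b (y : 'I_N -> S) j a c : map_mx f (LS' b y j a c) = LS' (f b) (fun k => f (y k)) j a c.
Proof.
rewrite /LS'; case: ifP => _; last case: ifP => _; last case: ifP => _;
  by rewrite map_locS ?map_mxD ?map_mxZ ?map_mxM ?map_sigmS ?map_sigpS ?rmorphD ?rmorphM ?rmorph1.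
Qed.

Lemma map_MonS (L : 'I_N -> monoS S N) (L' : 'I_N -> monoS S' N) :
  (forall j a c, map_mx f (L j a c) = L' j a c) ->
  forall s a c, map_mx f (MonS L s a c) = MonS L' s a c.
Proof.
move=> hL; elim/last_ind => [|s k IH] a c.
  by rewrite /MonS /= /mono_idS map_scalar_mx rmorph_nat.
rewrite !MonS_rcons /mono_mulS raddf_sum; apply: eq_bigr => d _.

by rewrite /= map_mxM hL IH.
Qed.

Lemma map_HS b q (y : 'I_N -> S) : map_mx f (HS b q y) = HS (f b) (f q) (fun k => f (y k)).
Proof. by rewrite /HS map_mxD map_mxZ !(map_MonS (map_LS b y)). Qed.
Lemma map_ES b q (y : 'I_N -> S) : map_mx f (ES b q y) = ES (f b) (f q) (fun k => f (y k)).
Proof. by rewrite /ES map_mxD map_mxZ !(map_MonS (map_LS' b y)). Qed.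

Lemma map_comm n (A B : 'M[S]_n) :
  map_mx f (A *m B - B *m A) = map_mx f A *m map_mx f B - map_mx f B *m map_mx f A.
Proof. by rewrite map_mxB !map_mxM. Qed.

Lemma map_HH b q (y y' : 'I_N -> S) :
  map_mx f (HS b q y *m HS b q y' - HS b q y' *m HS b q y) =
  HS (f b) (f q) (fun k => f (y k)) *m HS (f b) (f q) (fun k => f (y' k)) -
  HS (f b) (f q) (fun k => f (y' k)) *m HS (f b) (f q) (fun k => f (y k)).
Proof. by rewrite map_comm !map_HS. Qed.
Lemma map_EE b q (y y' : 'I_N -> S) :
  map_mx f (ES b q y *m ES b q y' - ES b q y' *m ES b q y) =
  ES (f b) (f q) (fun k => f (y k)) *m ES (f b) (f q) (fun k => f (y' k)) -
  ES (f b) (f q) (fun k => f (y' k)) *m ES (f b) (f q) (fun k => f (y k)).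
Proof. by rewrite map_comm !map_ES. Qed.
Lemma map_HE b q (y y' : 'I_N -> S) :
  map_mx f (HS b q y *m ES b q y' - ES b q y' *m HS b q y) =
  HS (f b) (f q) (fun k => f (y k)) *m ES (f b) (f q) (fun k => f (y' k)) -
  ES (f b) (f q) (fun k => f (y' k)) *m HS (f b) (f q) (fun k => f (y k)).
Proof. by rewrite map_comm map_HS map_ES. Qed.
End Nat.


Section Final.
Variables (F : fieldType) (N : nat) (beta q : F) (t : 'I_N -> F).
Hypothesis ht : forall j, 1 + beta * t j != 0.

Local Notation T := (tr F).
Local Notation iota a := (Tr a 0 0 : T).

Lemma tr_eqE (a0 a1 a2 b0 b1 b2 : F) : a0 = b0 -> a1 = b1 -> a2 = b2 -> Tr a0 a1 a2 = Tr b0 b1 b2.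
Proof. by move=> -> -> ->. Qed.

Lemma HH_F x x' : Hop beta q t x *m Hop beta q t x' = Hop beta q t x' *m Hop beta q t x.
Proof.
pose s j := 1 + beta * t j.
pose yT j : T := Tr (ominus beta x (t j)) (s j)^-1 0.
pose yT' j : T := Tr (ominus beta x' (t j)) (s j)^-1 0.
have h := @HH_S T N (iota beta) (iota q) yT yT' (Tr (1 + beta * x) beta 0) (Tr (1 + beta * x') beta 0)
   (iota (x' - x)) (fun j => iota (s j)).
have hs : forall j, s j != 0 by move=> j; exact: ht.
have {h}h := h
  ltac:(move=> j; rewrite !(tr_mulE, tr_addE, tr_oneE) /=; apply: tr_eqE; rewrite /ominus /s; field; exact: hs)
  ltac:(move=> j; rewrite !(tr_mulE, tr_addE, tr_oneE) /=; apply: tr_eqE; rewrite /ominus /s; field; exact: hs)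
  ltac:(move=> j; rewrite !(tr_mulE, tr_addE, tr_oppE) /=; apply: tr_eqE; rewrite /ominus /s; field; exact: hs).
have hc : Tr (1 + beta * x) beta 0 * Tr (1 + beta * x') beta 0 != 0 :> T.
  rewrite tr_mulE tr_zeroE /=; apply/eqP => -[e0 _ e2].
  have [hb|hb] := eqVneq beta 0.
    by move: e0; rewrite hb !mul0r addr0 mulr1 => /eqP; rewrite oner_eq0.
  by move: e2; rewrite !mulr0 mul0r !addr0 add0r => /eqP; rewrite mulf_eq0 orbb (negbTE hb).
have := tr_cancel hc h.
rewrite map_HH.
move=> /eqP; rewrite subr_eq0 => /eqP e.
exact: e.
Qed.

Lemma EE_F x x' : Eop beta q t x *m Eop beta q t x' = Eop beta q t x' *m Eop beta q t x.
Proof.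
pose s j := 1 + beta * t j.
pose zT j : T := Tr (oplus beta x (t j)) (s j) 0.
pose zT' j : T := Tr (oplus beta x' (t j)) (s j) 0.
have h := @EE_S T N (iota beta) (iota q) zT zT' (Tr (1 + beta * x) beta 0) (Tr (1 + beta * x') beta 0)
   (iota (x - x')) (fun j => iota (s j)^-1).
have hs : forall j, s j != 0 by move=> j; exact: ht.
have {h}h := h
  ltac:(move=> j; rewrite !(tr_mulE, tr_addE, tr_oneE) /=; apply: tr_eqE; rewrite /oplus /s; field; exact: hs)
  ltac:(move=> j; rewrite !(tr_mulE, tr_addE, tr_oneE) /=; apply: tr_eqE; rewrite /oplus /s; field; exact: hs)
  ltac:(move=> j; rewrite !(tr_mulE, tr_addE, tr_oppE) /=; apply: tr_eqE; rewrite /oplus /s; field; exact: hs).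
have hc : Tr (1 + beta * x') beta 0 * Tr (1 + beta * x) beta 0 != 0 :> T.
  rewrite tr_mulE tr_zeroE /=; apply/eqP => -[e0 _ e2].
  have [hb|hb] := eqVneq beta 0.
    by move: e0; rewrite hb !mul0r addr0 mulr1 => /eqP; rewrite oner_eq0.
  by move: e2; rewrite !mulr0 mul0r !addr0 add0r => /eqP; rewrite mulf_eq0 orbb (negbTE hb).
have := tr_cancel hc h.
rewrite map_EE.
move=> /eqP; rewrite subr_eq0 => /eqP e.
exact: e.
Qed.

Lemma HE_F x x' : Hop beta q t x *m Eop beta q t x' = Eop beta q t x' *m Hop beta q t x.
Proof.
pose s j := 1 + beta * t j.
have hs : forall j, s j != 0 by move=> j; exact: ht.
pose y j := ominus beta x (t j).
pose z j := oplus beta x' (t j).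
pose w0 := oplus beta x x'.
have hw : forall j, w0 = y j + z j + beta * y j * z j.
  by move=> j; rewrite /w0 /y /z /oplus /ominus; field; exact: hs.
have [hx|hx] := eqVneq (1 + beta * x) 0.
  have hb : beta != 0 by apply/eqP => hb0; move: hx; rewrite hb0 mul0r addr0 => /eqP; rewrite oner_eq0.
  have hw0 : w0 = x.
    rewrite /w0 /oplus (_ : x + x' + beta * x * x' = x + x' * (1 + beta * x)); last by ring.
    by rewrite hx mulr0 addr0.
  have hx0 : x != 0 by apply/eqP => hx00; move: hx; rewrite hx00 mulr0 addr0 => /eqP; rewrite oner_eq0.
  have := @HE_S F N beta q y z w0 hw.
  move=> /eqP; rewrite scaler_eq0 mulf_eq0 (negbTE hb) hw0 (negbTE hx0) /= subr_eq0 => /eqP e.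
  exact: e.
have hy : forall j, 1 + beta * y j != 0.
  move=> j; rewrite /y /ominus.
  rewrite (_ : 1 + beta * ((x - t j) / (1 + beta * t j)) = (1 + beta * x) / (1 + beta * t j)); last by field; exact: hs.
  by rewrite mulf_neq0 // invr_neq0 //; exact: hs.
pose z1 j := (1 - z j * y j) / (1 + beta * y j).
pose z2 j := - (z1 j * y j) / (1 + beta * y j).
pose yT j : T := iota (y j).
pose zT j : T := Tr (z j) (z1 j) (z2 j).
have h := @HE_S T N (Tr beta 1 0) (iota q) yT zT (Tr w0 1 0).
have hh : forall j, Tr w0 1 0 = yT j + zT j + Tr beta 1 0 * yT j * zT j.
  move=> j; rewrite !(tr_mulE, tr_addE) /=; apply: tr_eqE; first exact: hw.
    by rewrite /z1; field; exact: hy.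
  by rewrite /z2 /z1; field; exact: hy.
have {h}h := h hh.
have hc : Tr beta 1 0 * Tr w0 1 0 != 0 :> T.
  by rewrite tr_mulE tr_zeroE /=; apply/eqP => -[_ _]; rewrite ?mulr0 ?mulr1 ?mul0r ?add0r ?addr0 => /eqP; rewrite oner_eq0.
have := tr_cancel hc h.
rewrite map_HE.
move=> /eqP; rewrite subr_eq0 => /eqP e.
exact: e.
Qed.
End Final.


Section Perm.
Variables (F : fieldType) (N : nat) (T : F -> op F N).
Hypothesis hT : forall a b, T a *m T b = T b *m T a.
Let g := fun (acc : op F N) a => T a *m acc.
Let P l := foldl g 1%:M l.

Lemma foldl_acc l acc : foldl g acc l = P l *m acc.
Proof.
elim: l acc => [|a l IH] acc /=; first by rewrite /P /= mul1mx.
by rewrite /P /= !IH /g mulmx1 mulmxA.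
Qed.

Lemma P_cons a l : P (a :: l) = P l *m T a.
Proof. by rewrite /P /= foldl_acc /g mulmx1. Qed.

Lemma comm_P a l : T a *m P l = P l *m T a.
Proof.
elim: l => [|b l IH]; first by rewrite /P /= mul1mx mulmx1.
by rewrite P_cons mulmxA IH -!mulmxA hT.
Qed.

Lemma P_cat l1 l2 : P (l1 ++ l2) = P l2 *m P l1.
Proof. by rewrite /P foldl_cat foldl_acc. Qed.

Lemma P_perm l1 l2 : perm_eq l1 l2 -> P l1 = P l2.
Proof.
elim: l1 l2 => [|a l IH] l2 hp.
  by move: (perm_size hp) => /esym /size0nil ->.
have ha : a \in l2 by rewrite -(perm_mem hp) mem_head.
case/splitPr: ha hp => l21 l22 hp.
have hp' : perm_eq l (l21 ++ l22).
  rewrite -(perm_cons a); apply: (perm_trans hp).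
  by rewrite -cat1s perm_catCA.
rewrite P_cons (IH _ hp') !P_cat P_cons -!mulmxA comm_P.
done.
Qed.

Lemma opprod_perm n (xs : 'I_n -> F) (s : 'S_n) : opprod T (fun i => xs (s i)) = opprod T xs.
Proof.
rewrite /opprod.
have e : forall (ys : 'I_n -> F), foldl (fun acc i => T (ys i) *m acc) 1%:M (enum 'I_n) = P (map ys (enum 'I_n)).
  move=> ys; rewrite /P; elim: (enum 'I_n) (1%:M : op F N) => //= i l IH acc.
rewrite !e; apply: P_perm.
rewrite (_ : [seq xs (s i) | i <- enum 'I_n] = map xs (map s (enum 'I_n))); last exact: map_comp.
apply: perm_map; apply: uniq_perm.
- by rewrite (map_inj_uniq (@perm_inj _ s)) enum_uniq.
- exact: enum_uniq.
move=> i; rewrite mem_enum; apply/mapP; exists (s^-1 i)%g; first by rewrite mem_enum.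
by rewrite permKV.
Qed.
End Perm.


Theorem mainTheorem4 (F : fieldType) (N : nat) (beta q : F) (t : 'I_N -> F)
  (ht : forall j, 1 + beta * t j != 0) :
  (forall x x' : F,
     Hop beta q t x *m Hop beta q t x' = Hop beta q t x' *m Hop beta q t x /\
     Eop beta q t x *m Eop beta q t x' = Eop beta q t x' *m Eop beta q t x /\
     Hop beta q t x *m Eop beta q t x' = Eop beta q t x' *m Hop beta q t x) /\
  (forall (n : nat) (xs : 'I_n -> F) (s : 'S_n),
     Zop beta q t (fun i => xs (s i)) = Zop beta q t xs /\
     Zop' beta q t (fun i => xs (s i)) = Zop' beta q t xs).
Proof.
split.
  move=> x x'; split; first exact: (@HH_F F N beta q t ht).
  by split; [exact: (@EE_F F N beta q t ht) | exact: (@HE_F F N beta q t ht)].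
move=> n xs s; split.
- by apply: opprod_perm => a b; exact: (@HH_F F N beta q t ht).
- by apply: opprod_perm => a b; exact: (@EE_F F N beta q t ht).
Qed.
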